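(* For every $n\ge 4$, $\beta(P_\infty\,\Box\, K_n)=n-1$, and $S=\{(0,0),(0,1),\dots,(0,n-2)\}$ is a metric basis of $P_\infty\,\Box\, K_n$.
   Context: $P_\infty$ has vertex set $\mathbb N=\{0,1,2,\dots\}$ with $i,j$ adjacent iff $|i-j|=1$. $K_n$ is the complete graph on vertex set $\{0,1,\dots,n-1\}$. The cartesian product $G\Box H$ has vertex set $V(G)\times V(H)$, where $(a,v)$ is adjacent to $(b,w)$ iff either $a=b$ and $vw\in E(H)$, or $v=w$ and $ab\in E(G)$. A vertex $x$ resolves $u,v$ if $d(u,x)\ne d(v,x)$ (shortest-path distance); a resolving set is a set of vertices resolving every pair of distinct vertices; $\beta$ is the minimum cardinality of a resolving set ($\infty$ if none is finite), and a metric basis is a resolving set of cardinality $\beta$. *)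

(* Defs.v *)
From Stdlib Require Import Classical ClassicalEpsilon.
From mathcomp Require Import all_boot.
Set Implicit Arguments. Unset Strict Implicit. Unset Printing Implicit Defensive.

Section Graphs.
Variable V : eqType.
Variable adj : V -> V -> Prop.

Fixpoint walk (k : nat) (u v : V) : Prop :=
  match k with
  | 0 => u = v
  | k'.+1 => exists w, adj u w /\ walk k' w v
  end.

Definition asbool (P : Prop) : bool :=
  if excluded_middle_informative P then true else false.

Lemma asboolP (P : Prop) : reflect P (asbool P).
Proof. rewrite /asbool; case: excluded_middle_informative => H; constructor; done. Qed.

(* shortest-path distance; None encodes infinite distance (no path) *)
Definition dist (u v : V) : option nat :=
  match excluded_middle_informative (exists k, walk k u v) with
  | left H =>
      Some (@ex_minn (fun k => asbool (walk k u v))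
              (let: ex_intro k Hk := H in ex_intro _ k (introT (asboolP _) Hk)))
  | right _ => None
  end.

Definition resolves (x u v : V) : Prop := dist u x <> dist v x.

Definition resolving (S : seq V) : Prop :=
  forall u v : V, u <> v -> exists2 x, x \in S & resolves x u v.

Definition metric_dim_is (k : nat) : Prop :=
  (exists S : seq V, [/\ uniq S, resolving S & size S = k]) /\
  (forall S : seq V, uniq S -> resolving S -> k <= size S).

Definition metric_basis (S : seq V) : Prop :=
  [/\ uniq S, resolving S &
      forall T : seq V, uniq T -> resolving T -> size S <= size T].
End Graphs.

Definition path_inf_adj (i j : nat) : Prop := i.+1 = j \/ j.+1 = i.

Definition complete_adj (n : nat) (v w : 'I_n) : Prop := v <> w.

Definition box_adj (A B : Type) (adjG : A -> A -> Prop) (adjH : B -> B -> Prop)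
  (x y : A * B) : Prop :=
  (x.1 = y.1 /\ adjH x.2 y.2) \/ (x.2 = y.2 /\ adjG x.1 y.1).

Definition PK_adj (n : nat) : nat * 'I_n -> nat * 'I_n -> Prop :=
  box_adj path_inf_adj (@complete_adj n).

Definition basisS (n : nat) : seq (nat * 'I_n) :=
  [seq (0%N, i) | i : 'I_n <- enum 'I_n & (i < n - 1)%N].

(* Main.v *)
Require Import Defs.
From mathcomp Require Import all_boot.
From Stdlib Require Import Lia Classical ClassicalEpsilon.

Set Implicit Arguments. Unset Strict Implicit. Unset Printing Implicit Defensive.

Lemma walk_cat (V : eqType) (adj : V -> V -> Prop) k m u w v :
  walk adj k u w -> walk adj m w v -> walk adj (k + m) u v.
Proof.
elim: k u => [|k IH] u /= H1 H2; first by subst.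
case: H1 => x [Hx Hw]; exists x; split => //; exact: IH.
Qed.

Lemma dist_eq (V : eqType) (adj : V -> V -> Prop) u v d :
  walk adj d u v -> (forall k, walk adj k u v -> d <= k) -> dist adj u v = Some d.
Proof.
move=> Hd Hmin; rewrite /dist; case: excluded_middle_informative => H; last first.
  by exfalso; apply: H; exists d.
case: ex_minnP => m /asboolP Hm Hle; congr Some; apply/eqP; rewrite eqn_leq.
by rewrite Hmin // Hle //; apply/asboolP.
Qed.

Section PK.
Variable n : nat.

Definition Dn (u v : nat * 'I_n) : nat := (u.1 - v.1) + (v.1 - u.1) + (u.2 != v.2).

Lemma step_lb (u w v : nat * 'I_n) : PK_adj u w -> Dn u v <= (Dn w v).+1.
Proof.
case: u => i a; case: w => i' c; case: v => j b.
rewrite /PK_adj /box_adj /Dn /path_inf_adj /complete_adj /= => [[[-> Hac]|[-> H]]].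
  have: (a != b) <= 1 by case: (a != b).
  move: (a != b) (c != b) => x y; move/leP => Hx; apply/leP.
  rewrite -!plusE -!minusE; simpl; lia.
move: (c != b) => x; apply/leP; rewrite -!plusE -!minusE; simpl; lia.
Qed.

Lemma walk_lb k (u v : nat * 'I_n) : walk (@PK_adj n) k u v -> Dn u v <= k.
Proof.
elim: k u => [|k IH] u /=.
  by move=> ->; rewrite /Dn !subnn eqxx.
case=> w [Hw Hwk]; apply: leq_trans (step_lb v Hw) _; exact: IH.
Qed.

Lemma col_walk m i (a : 'I_n) :
  walk (@PK_adj n) m (i, a) (i + m, a) /\ walk (@PK_adj n) m (i + m, a) (i, a).
Proof.
elim: m i => [|m IH] i /=; first by rewrite addn0.
have [H1 H2] := IH i.+1; rewrite -addSnnS; split.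
  exists (i.+1, a); split => //; right; split => //; left => //.
have := walk_cat (v := (i, a)) H2 (_ : walk (@PK_adj n) 1 (i.+1, a) (i, a)).
rewrite addn1; apply; exists (i, a); split => //; right; split => //; right => //.
Qed.

Lemma walk_ub (u v : nat * 'I_n) : walk (@PK_adj n) (Dn u v) u v.
Proof.
case: u => i a; case: v => j b; rewrite /Dn /=.
have Hb : walk (@PK_adj n) (a != b) (j, a) (j, b).
  case: eqVneq => [->|Hab] //=; exists (j, b); split => //; left; split => //.
  by move=> /= E; rewrite E eqxx in Hab.
case: (leqP i j) => Hij.
  have E : i - j = 0 by apply/eqP; rewrite subn_eq0.
  rewrite E add0n.
  have [H _] := col_walk (j - i) i a.
  rewrite (subnKC Hij) in H.
  exact: (walk_cat H Hb).
have E : j - i = 0 by apply/eqP; rewrite subn_eq0 ltnW.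
rewrite E addn0.
have [_ H] := col_walk (i - j) j a.
rewrite (subnKC (ltnW Hij)) in H.
exact: (walk_cat H Hb).
Qed.

Lemma dist_PK (u v : nat * 'I_n) : dist (@PK_adj n) u v = Some (Dn u v).
Proof. apply: dist_eq; [exact: walk_ub | move=> k Hk; exact: (walk_lb Hk)]. Qed.

End PK.

Lemma size_basisS n : size (basisS n) = n - 1.
Proof.
rewrite /basisS size_map -(size_map (@nat_of_ord n)).
rewrite -(filter_map (@nat_of_ord n) (fun k => k < n - 1)) val_enum_ord.
have := @filter_iota_ltn 0 n (n - 1) (leq_subr 1 n); rewrite add0n => ->.
by rewrite size_iota.
Qed.

Lemma uniq_basisS n : uniq (basisS n).
Proof.
rewrite /basisS map_inj_uniq; last by move=> x y [].
by apply: filter_uniq; apply: enum_uniq.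
Qed.

Lemma mem_basisS n (b : 'I_n) : b < n - 1 -> (0, b) \in basisS n.
Proof. by move=> H; apply: map_f; rewrite mem_filter mem_enum H. Qed.

Lemma resolving_basisS n : 4 <= n -> resolving (@PK_adj n) (basisS n).
Proof.
move=> hn [i a] [j c] Huv.
have Dx : forall (k : nat) (d b : 'I_n), Dn (k, d) (0, b) = k + (d != b).
  by move=> k d b; rewrite /Dn /= subn0 sub0n addn0.
case: (eqVneq i j) => [Eij|Nij].
  subst j.
  have Hac : a <> c by move=> E; apply: Huv; rewrite E.
  have Hac' : val a <> val c by move=> E; apply: Hac; apply: val_inj.
  case: (ltnP a (n - 1)) => Ha.
    exists (0, a); first exact: mem_basisS.
    rewrite /resolves !dist_PK !Dx eqxx.
    have -> : (c != a) = true by apply/eqP => E; apply: Hac.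
    by move=> [] /eqP; rewrite addn0 -addn1 -{1}[i]addn0 eqn_add2l.
  have Hc : c < n - 1.
    have := ltn_ord a; have := ltn_ord c; move: Ha => /leP Ha /leP Hc1 /leP Ha1.
    apply/leP; rewrite -!minusE in Ha *; simpl in *. lia.
  exists (0, c); first exact: mem_basisS.
  rewrite /resolves !dist_PK !Dx eqxx.
  have -> : (a != c) = true by apply/eqP => E; apply: Hac.
  by move=> [] /eqP; rewrite addn0 -addn1 -{2}[i]addn0 eqn_add2l.
have [k [Hk3 [Hka Hkc]]] : exists k, k < 3 /\ k <> val a /\ k <> val c.
  move: (val a) (val c) => x y.
  destruct (PeanoNat.Nat.eq_dec x 0); destruct (PeanoNat.Nat.eq_dec y 0);
  destruct (PeanoNat.Nat.eq_dec x 1); destruct (PeanoNat.Nat.eq_dec y 1);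
  first [exists 0; split; [done|lia] | exists 1; split; [done|lia]
        | exists 2; split; [done|lia]].
have Hkn : k < n by apply: leq_trans Hk3 (leq_trans _ hn).
pose b := Ordinal Hkn.
exists (0, b).
  apply: mem_basisS => /=; move: Hk3 hn => /leP H1 /leP H2; apply/leP; rewrite -!minusE; lia.
rewrite /resolves !dist_PK !Dx.
have -> : (a != b) = true by apply/eqP => E; apply: Hka; rewrite E.
have -> : (c != b) = true by apply/eqP => E; apply: Hkc; rewrite E.
by move=> [] /eqP; rewrite eqn_add2r (negbTE Nij).
Qed.

Lemma lower n (T : seq (nat * 'I_n)) : uniq T -> resolving (@PK_adj n) T -> n - 1 <= size T.
Proof.
move=> _ HT.
set C := [seq x.2 | x <- T].
have key : forall a c : 'I_n, a != c -> (a \in C) || (c \in C).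
  move=> a c Hac; apply/negPn/negP; rewrite negb_or => /andP[Ha Hc].
  have Hne : ((0, a) : nat * 'I_n) <> (0, c).
    by move=> [E]; rewrite E eqxx in Hac.
  have [x Hx Hr] := HT (0, a) (0, c) Hne.
  apply: Hr; rewrite !dist_PK; congr Some.
  case: x Hx => k b Hx; rewrite /Dn /=.
  have Hb : b \in C by exact: (map_f (fun x : nat * 'I_n => x.2) Hx).
  have -> : (a != b) = true by apply/eqP => E; rewrite E Hb in Ha.
  have -> : (c != b) = true by apply/eqP => E; rewrite E Hb in Hc.
  done.
have H1 : #|[predC C]| <= 1.
  rewrite leqNgt; apply/card_gt1P => -[a [c [Ha Hc Hac]]].
  by move: (key a c Hac); rewrite !inE in Ha Hc; rewrite (negbTE Ha) (negbTE Hc).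
have E : #|C| + #|[predC C]| = n by rewrite cardC card_ord.
have H2 := card_size C; rewrite size_map in H2.
apply: (leq_trans _ H2); rewrite -{1}E leq_subLR addnC leq_add2r //.
Qed.

Theorem proposition8 (n : nat) (hn : 4 <= n) :
  metric_dim_is (@PK_adj n) (n - 1) /\ metric_basis (@PK_adj n) (basisS n).
Proof.
split; [split|split].
- exists (basisS n); split; [exact: uniq_basisS | exact: resolving_basisS | exact: size_basisS].
- move=> T; exact: lower.
- exact: uniq_basisS.
- exact: resolving_basisS.
- move=> T HuT HrT; rewrite size_basisS; exact: lower HrT.
Qed.
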